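(* Let $\Sigma^*$ be an $n\times n$ positive definite matrix whose conditional independence structure is a tree $T^*$, with smallest eigenvalue $\lambda^*$, let $D^*$ be a diagonal matrix with nonnegative entries satisfying $D^*_{ii}<\lambda^*$ for all $i$, and let $\Sigma^o=\Sigma^*+D^*$. Then for every decomposition $\Sigma^o=\Sigma'+D'$ in which $\Sigma'$ is positive definite with smallest eigenvalue at least $\lambda^*$ and conditional independence structure a tree $T'$, and $D'$ is diagonal with nonnegative entries, we have $T'=T^*$.
   Context: For an $n\times n$ positive definite matrix $\Sigma$ with inverse $\Omega$, its conditional independence structure is the graph on $\{1,\dots,n\}$ with an edge $\{i,j\}$ ($i\neq j$) iff $\Omega_{ij}\neq 0$. *)

(* Defs.v *)
From HB Require Import structures.
From mathcomp Require Import all_boot all_order all_algebra.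
From mathcomp Require Import reals.
Set Implicit Arguments. Unset Strict Implicit. Unset Printing Implicit Defensive.
Import Order.TTheory GRing.Theory Num.Theory.
Local Open Scope ring_scope.

Definition posdef (R : realType) (n : nat) (A : 'M[R]_n) : Prop :=
  A^T = A /\ forall x : 'cV[R]_n, x != 0 -> 0 < (x^T *m A *m x) 0 0.

Definition ci_graph (R : realType) (n : nat) (A : 'M[R]_n) : rel 'I_n :=
  fun i j => (i != j) && (invmx A i j != 0).

Definition is_tree (n : nat) (e : rel 'I_n) : Prop :=
  (forall i j : 'I_n, connect e i j) /\
  ~ (exists c : seq 'I_n, [/\ 3 <= size c, uniq c & cycle e c])%N.

Definition smallest_eigenvalue (R : realType) (n : nat) (A : 'M[R]_n) (lam : R) : Prop :=
  eigenvalue A lam /\ forall a, eigenvalue A a -> lam <= a.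

Definition nonneg_diag (R : realType) (n : nat) (D : 'M[R]_n) : Prop :=
  is_diag_mx D /\ forall i, 0 <= D i i.

(* Main.v *)
Require Import Defs.
From HB Require Import structures.
From mathcomp Require Import all_boot all_order all_algebra.
From mathcomp Require Import reals.
From mathcomp Require Import complex sesquilinear spectral.
From mathcomp Require Import ring lra.
Import Order.TTheory GRing.Theory Num.Theory.
Local Open Scope ring_scope.

Section Ray.
Local Open Scope sesquilinear_scope.
Variable R : realType.
Local Notation f := (real_complex R).
Lemma rayleigh n (B : 'M[R]_n) (lam : R) :
  B^T = B -> (forall a, eigenvalue B a -> lam <= a) ->
  forall x : 'cV[R]_n, lam * (x^T *m x) 0 0 <= (x^T *m B *m x) 0 0.
Proof.
move=> Bsym Heig x.
pose Bc : 'M[R[i]]_n := B ^ f.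
have Bher : Bc \is hermsymmx.
  apply: realsym_hermsym.
    apply/is_hermitianmxP; rewrite expr0 scale1r map_mx_id //.
    by rewrite /Bc map_trmx Bsym.
  by apply/mxOverP => i j; rewrite mxE; apply/complex_realP; exists (B i j).
have /orthomx_spectralP Bdec := hermitian_normalmx Bher.
set P := spectralmx Bc in Bdec. set d := spectral_diag Bc in Bdec.
have Pu : P \is unitarymx := spectral_unitarymx Bc.
have PU : P \in unitmx := spectral_unit Bc.
have dreal : d \is a realmx := hermitian_spectral_diag_real Bher.
have dRe : forall j, f (complex.Re (d 0 j)) = d 0 j.
  by move=> j; apply: RRe_real; exact: (mxOverP dreal).
have deig : forall j, lam <= complex.Re (d 0 j).
  move=> j; apply: Heig.
  rewrite eigenvalue_root_char -(fmorph_root f) map_char_poly.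
  rewrite -eigenvalue_root_char.
  suff H : eigenvalue Bc (d 0 j) by move: H; rewrite -{1}dRe.
  apply/eigenvalueP; exists (row j P).
    rewrite -row_mul.
    have -> : P *m Bc = diag_mx d *m P by rewrite Bdec !mulmxA mulmxV // mul1mx.
    by rewrite row_mul row_diag_mx -scalemxAl -rowE.
  apply/eqP => h.
  have := congr1 (mulmx^~ (P^t*)) h.
  rewrite -row_mul mul0mx (unitarymxP Pu) => /matrixP /(_ 0 j).
  by rewrite !mxE eqxx /= => /eqP; rewrite oner_eq0.
pose xc := x ^ f.
have xcE : xc^t* = (x^T) ^ f.
  apply/matrixP => i j; rewrite !mxE; apply: conj_Creal.
  by rewrite /f /= complex_real.
have q1 : f ((x^T *m B *m x) 0 0) = (xc^t* *m Bc *m xc) 0 0.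
  rewrite xcE /Bc /xc (_ : f _ = ((x^T *m B *m x) ^ f) 0 0); last by rewrite [RHS]mxE. by rewrite !map_mxM.
have q2 : f ((x^T *m x) 0 0) = (xc^t* *m xc) 0 0.
  rewrite xcE /xc (_ : f _ = ((x^T *m x) ^ f) 0 0); last by rewrite [RHS]mxE. by rewrite !map_mxM.
pose w := P *m xc.
have q1' : xc^t* *m Bc *m xc = w^t* *m diag_mx d *m w.
  by rewrite Bdec invmx_unitary // /w trmx_mul map_mxM !mulmxA.
have q2' : xc^t* *m xc = w^t* *m w.
  by rewrite /w trmx_mul map_mxM !mulmxA mulmxKtV.
rewrite -subr_ge0 -ler0c rmorphB rmorphM /= q1 q2 q1' q2'.
rewrite !mxE mulr_sumr -sumrB; apply: sumr_ge0 => j _.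
rewrite mul_mx_diag !mxE -dRe.
set y := (\sum_(_ < _) _).
rewrite mulrAC [lam%:C%C * _]mulrC -mulrBr; apply: mulr_ge0.
  by rewrite mulrC mul_conjC_ge0.
by rewrite -rmorphB ler0c subr_ge0.
Qed.
End Ray.

Set Implicit Arguments. Unset Strict Implicit.

Section Graph.
Variable T : finType.
Implicit Types e : rel T.

Definition cut e (a b : T) : rel T := fun x y =>
  e x y && ~~ (((x == a) && (y == b)) || ((x == b) && (y == a))).

Definition acyclic e := ~ (exists c : seq T, [/\ 3 <= size c, uniq c & cycle e c])%N.

Lemma upath e x y : connect e x y ->
  exists p, [/\ path e x p, last x p = y & uniq (x :: p)].
Proof.
case/connectP => p pp ->; case: (shortenP pp) => p' pp' up' _ .
by exists p'.
Qed.

Lemma cutC e a b : cut e a b =2 cut e b a.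
Proof. by move=> x y; rewrite /cut orbC. Qed.

Lemma cut_sub e a b : subrel (cut e a b) e.
Proof. by move=> x y /andP[]. Qed.

Lemma path_cut e a b x p : a \notin x :: p -> path e x p -> path (cut e a b) x p.
Proof.
move=> ap; apply: (@sub_in_path _ (predC1 a)).
  move=> u v; rewrite !inE /= => ua va euv; rewrite /cut euv /=.
  by rewrite (negbTE ua) (negbTE va) /= andbF.
by apply/allP => z zin; rewrite /= ; apply: contraNneq ap => <-.
Qed.

Lemma cut_sep e a b : acyclic e -> e a b -> a != b ->
  ~~ connect (cut e a b) b a.
Proof.
move=> acy eab neab; apply/negP => /upath [p [pp lp up]].
case: p pp lp up => [|v [|w p]] /=.
- by move=> _ ba; rewrite ba eqxx in neab.
- by move=> /andP[] /andP[] _ H _ va; rewrite va !eqxx /= orbT in H.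
move=> pp lp up; apply: acy; exists [:: b, v, w & p]; split => //.
have pp' : path (cut e a b) b [:: v, w & p] by [].
rewrite /cycle rcons_path (sub_path (@cut_sub e a b) pp') /=.
by rewrite lp.
Qed.

Lemma cut_part e a b k : e a b -> a != b -> connect e a k ->
  connect (cut e a b) a k || connect (cut e a b) b k.
Proof.
move=> eab neab /upath [[|v p] [pp lp up]].
  by rewrite -lp connect0.
have ap : a \notin v :: p by case/andP: up.
have [vb|nvb] := eqVneq v b.
  subst v; apply/orP; right; apply/connectP; exists p => //.
  apply: path_cut; last by case/andP: pp.
  by [].
apply/orP; left; apply/connectP; exists (v :: p) => //.
rewrite /= {1}/cut; case/andP: pp => -> pp /=.
rewrite eqxx (negbTE nvb) (negbTE neab) /=.
exact: path_cut.
Qed.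

Lemma tree_mid e i j : acyclic e -> connect e i j -> i != j -> ~~ e i j ->
  exists k, [/\ e i k, k != i, k != j & connect (cut e i k) k j].
Proof.
move=> acy /upath [[|v [|w p]] [pp lp up]] nij neij.
- by rewrite -lp eqxx in nij.
- by move: lp pp => /= -> /andP[H _]; rewrite H in neij.
exists v; case/andP: pp => eiv pp; split => //.
- by apply/eqP => vi; case/andP: up; rewrite vi inE eqxx.
- rewrite -lp; apply: contraTneq up => ->; rewrite /= negb_and; apply/orP; right.
  by rewrite negb_and negbK mem_last.
apply/connectP; exists [:: w & p] => //.
apply: path_cut => //; by case/andP: up.
Qed.

Lemma tree_sub e e' : acyclic e -> (forall x y, connect e' x y) ->
  subrel e' e -> (forall x y, e x y = e y x) -> forall x y, x != y -> e x y -> e' x y.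
Proof.
move=> acy con sub esym x y nxy exy; have [p [pp lp up]] := @upath e' _ _ (con x y).
case: p pp lp up => [|v [|w p]] pp lp up.
- by rewrite -lp eqxx in nxy.
- by move: pp lp => /= /andP[] ? _ <-.
exfalso; apply: acy; exists [:: x, v, w & p]; split => //.
rewrite /cycle rcons_path (sub_path sub pp) /=.
by move: lp => /= ->; rewrite esym.
Qed.
End Graph.

Unset Implicit Arguments. Set Strict Implicit.

Section LA.
Variable R : realType.
Variable n : nat.
Implicit Types A B M : 'M[R]_n.

Lemma symE A i j : A^T = A -> A i j = A j i.
Proof. by move=> As; rewrite -{1}As mxE. Qed.

Lemma qd M (i k : 'I_n) : ((delta_mx i 0 : 'cV[R]_n)^T *m M *m (delta_mx k 0 : 'cV[R]_n)) 0 0 = M i k.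
Proof. by rewrite trmx_delta -rowE -colE !mxE. Qed.

Lemma qdM M (i k : 'I_n) : ((delta_mx i 0 : 'cV[R]_n)^T *m M *m (delta_mx k 0 : 'cV[R]_n)) = (M i k)%:M.
Proof. by apply/matrixP => p q; rewrite !ord1 qd mxE. Qed.

Lemma quad2 M (i k : 'I_n) (a b : R) :
  let x := a *: (delta_mx i 0 : 'cV[R]_n) - b *: (delta_mx k 0 : 'cV[R]_n) in
  (x^T *m M *m x) 0 0 = a*a*M i i - a*b*M i k - b*a*M k i + b*b*M k k.
Proof.
move=> x.
have -> : x^T = a *: (delta_mx i 0 : 'cV[R]_n)^T - b *: (delta_mx k 0 : 'cV[R]_n)^T.
  by apply/matrixP=> p q; rewrite !mxE.
rewrite /x !mulmxBl !mulmxBr -!scalemxAl -!scalemxAr !qdM !mxE /=.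
ring.
Qed.

Lemma posdef_diag A i : posdef A -> 0 < A i i.
Proof.
case=> _ H; have := H (delta_mx i 0); rewrite qd; apply.
apply/eqP => /matrixP /(_ i 0); rewrite !mxE !eqxx /=.
by move/eqP; rewrite oner_eq0.
Qed.

Lemma posdef_unit {A} : posdef A -> A \in unitmx.
Proof.
case=> As H; rewrite -row_free_unit; apply: inj_row_free => v vA.
have [//|v0] := eqVneq v 0.
have v0' : v^T != 0 by rewrite trmx_eq0.
by have := H _ v0'; rewrite trmxK vA mul0mx mxE ltxx.
Qed.

Lemma posdef_eig A a : posdef A -> eigenvalue A a -> 0 < a.
Proof.
case=> As H /eigenvalueP [v vA v0].
have v0' : v^T != 0 by rewrite trmx_eq0.
have := H _ v0'; rewrite trmxK vA -scalemxAl mxE.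
have : 0 <= (v *m v^T) 0 0.
  by rewrite mxE; apply: sumr_ge0 => j _; rewrite mxE -expr2 sqr_ge0.
move: ((v *m v^T) 0 0) => s hs h; nra.
Qed.

Lemma quad0 A (z : 'I_n -> R) : posdef A ->
  (forall s, z s * \sum_t invmx A s t * z t = 0) -> forall s, z s = 0.
Proof.
move=> Apd Hz; have AU := posdef_unit (A:=A) Apd; case: Apd => As H.
pose zc : 'cV[R]_n := \col_s z s.
pose y := invmx A *m zc.
have zy : zc = A *m y by rewrite /y mulKVmx.
have Om : (invmx A)^T = invmx A by rewrite trmx_inv As.
have q0 : (y^T *m A *m y) 0 0 = 0.
  rewrite -mulmxA -zy /y trmx_mul Om -mulmxA mxE big1 // => s _.
  rewrite !mxE -[RHS](Hz s); congr (_ * _).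
  by apply: eq_bigr => t _; rewrite !mxE.
have y0 : y = 0.
  by have [//|yn] := eqVneq y 0; have := H _ yn; rewrite q0 ltxx.
move=> s; have := congr1 (fun M : 'cV[R]_n => M s 0) zy.
by rewrite y0 mulmx0 !mxE.
Qed.

Lemma quadS A (S : pred 'I_n) (w : 'I_n -> R) : posdef A ->
  (forall s, S s -> \sum_t invmx A s t * w t = 0) ->
  (forall s t, S s -> ~~ S t -> invmx A s t * w t = 0) ->
  forall s, S s -> w s = 0.
Proof.
move=> Apd h1 h2.
pose z t := if S t then w t else 0.
have := @quad0 A z Apd.
have Hz : forall s, z s * \sum_t invmx A s t * z t = 0.
  move=> s; case Ss : (S s); last by rewrite /z Ss mul0r.
  have E : \sum_t invmx A s t * z t = \sum_t invmx A s t * w t.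
    apply: eq_bigr => t _; rewrite /z.
    by case: ifP => St //; rewrite mulr0 h2 // St.
  by rewrite E h1 // mulr0.
move=> /(_ Hz) Z s Ss; by have := Z s; rewrite /z Ss.
Qed.

Lemma OAE A : posdef A -> forall s u, \sum_t invmx A s t * A t u = (s == u)%:R.
Proof.
move=> Apd s u; have := congr1 (fun M : 'M[R]_n => M s u) (mulVmx (posdef_unit Apd)).
by rewrite !mxE.
Qed.

Lemma factor A a b : posdef A -> ci_graph A a b ->
  ~~ connect (cut (ci_graph A) a b) b a ->
  forall x, connect (cut (ci_graph A) a b) b x -> A a x * A b b = A a b * A b x.
Proof.
move=> Apd eab sep x bx.
have As := Apd.1.
have OA := @OAE A Apd.
have [->|xb] := eqVneq x b; first by rewrite mulrC.
pose S := fun s => connect (cut (ci_graph A) a b) b s && (s != b).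
pose w t := A t a * A b b - A b a * A t b.
have := @quadS A S w Apd.
have h1 : forall s, S s -> \sum_t invmx A s t * w t = 0.
  move=> s /andP[bs sb].
  have sa : s != a by apply: contraNneq sep => sa; move: bs; rewrite sa.
  rewrite (eq_bigr (fun t => invmx A s t * A t a * A b b - A b a * (invmx A s t * A t b))); last first.
    by move=> t _; rewrite /w; ring.
  by rewrite sumrB -mulr_suml -mulr_sumr !OA (negbTE sa) (negbTE sb) /= mul0r mulr0 subrr.
have h2 : forall s t, S s -> ~~ S t -> invmx A s t * w t = 0.
  move=> s t /andP[bs sb] nSt.
  have [tb|tb] := eqVneq t b; first by rewrite tb /w subrr mulr0.
  have nbt : ~~ connect (cut (ci_graph A) a b) b t by move: nSt; rewrite /S tb andbT.
  have sa : s != a by apply: contraNneq sep => sa; move: bs; rewrite sa.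
  suff -> : invmx A s t = 0 by rewrite mul0r.
  have st : s != t by apply: contraNneq nbt => <-.
  apply/eqP; apply: contraNT nbt => Ost.
  apply: connect_trans bs (connect1 _).
  by rewrite /cut /ci_graph Ost st (negbTE sa) (negbTE sb).
move=> /(_ h1 h2 x); rewrite /S bx xb => /(_ isT) /eqP; rewrite subr_eq0 => /eqP.
by rewrite (symE A a x As) (symE A b x As) (symE A a b As).
Qed.

Lemma edge_nz A a b : posdef A -> ci_graph A a b ->
  ~~ connect (cut (ci_graph A) a b) b a -> A a b != 0.
Proof.
move=> Apd eab sep; apply/eqP => ab0.
have As := Apd.1.
have Om : (invmx A)^T = invmx A by rewrite trmx_inv As.
have Ax : forall x, connect (cut (ci_graph A) a b) b x -> A a x = 0.
  move=> x bx; have := factor A a b Apd eab sep x bx; rewrite ab0 mul0r => /eqP.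
  by rewrite mulf_eq0 (gt_eqF (posdef_diag A b Apd)) orbF => /eqP.
have /andP[nab Oab] := eab.
have ba : b != a by rewrite eq_sym.
have := @OAE A Apd b a; rewrite (negbTE ba) (bigD1 a) //= big1 ?addr0.
  move/eqP; rewrite mulf_eq0 (gt_eqF (posdef_diag A a Apd)) orbF.
  by rewrite (symE _ b a Om) (negbTE Oab).
move=> t ta; have [->|tb] := eqVneq t b.
  by rewrite (symE A b a As) ab0 mulr0.
have [->|Obt] := eqVneq (invmx A b t) 0; first by rewrite mul0r.
rewrite (symE A t a As) Ax ?mulr0 //.
apply: connect1; rewrite /cut /ci_graph Obt eq_sym tb /= eqxx (negbTE ba) /=.
by rewrite (negbTE ta).
Qed.
End LA.

Section Main.
Variable R : realType.
Variable n : nat.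

Lemma rpair (B : 'M[R]_n) lam (i k : 'I_n) : B^T = B ->
  (forall a, eigenvalue B a -> lam <= a) -> 0 <= lam -> i != k -> 0 < B i i ->
  B i k ^+ 2 <= B i i * (B k k - lam).
Proof.
move=> Bs Heig l0 ik Bii.
have := @rayleigh R n B lam Bs Heig (B i k *: (delta_mx i 0 : 'cV[R]_n) - B i i *: delta_mx k 0).
rewrite -[X in _ * (X *m _) 0 0]mulmx1 !quad2 !mxE !eqxx (negbTE ik) eq_sym (negbTE ik) /=.
rewrite (@symE _ _ B k i Bs) => H; nra.
Qed.

Lemma arith (a b ds dp l : R) : a * b <= b * (a + ds - dp - l) -> 0 < b -> ds < l -> 0 <= dp -> False.
Proof. move=> *; nra. Qed.

Lemma ci_sym (A : 'M[R]_n) : posdef A -> forall x y, ci_graph A x y = ci_graph A y x.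
Proof.
case=> As _ x y; have Om : (invmx A)^T = invmx A by rewrite trmx_inv As.
by rewrite /ci_graph eq_sym (@symE _ _ _ x y Om).
Qed.
End Main.

Theorem mainTheorem6 (R : realType) (n : nat)
  (Sstar Dstar : 'M[R]_n) (lamstar : R) :
  posdef Sstar ->
  is_tree (ci_graph Sstar) ->
  smallest_eigenvalue Sstar lamstar ->
  nonneg_diag Dstar ->
  (forall i, Dstar i i < lamstar) ->
  forall S' D' : 'M[R]_n,
    Sstar + Dstar = S' + D' ->
    posdef S' ->
    (forall a, eigenvalue S' a -> lamstar <= a) ->
    is_tree (ci_graph S') ->
    nonneg_diag D' ->
    ci_graph S' =2 ci_graph Sstar.
Proof.
move=> Spd [con acy] [eigS _] [Ddiag _] Dlt S' D' Heq Sp Seig [con' acy'] [D'diag D'nn].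
have lam0 : 0 < lamstar := @posdef_eig _ _ _ _ Spd eigS.
have S's : S'^T = S' := Sp.1.
have offd : forall s t, s != t -> Sstar s t = S' s t.
  move=> s t st; have := congr1 (fun M : 'M[R]_n => M s t) Heq.
  by rewrite !mxE (is_diag_mxP Ddiag s t st) (is_diag_mxP D'diag s t st) !addr0.
have dg : forall k, S' k k = Sstar k k + Dstar k k - D' k k.
  move=> k; have := congr1 (fun M : 'M[R]_n => M k k) Heq; rewrite !mxE => ->.
  by rewrite addrK.
have esym' := @ci_sym _ _ _ Sp.
have step1 : forall i j, ci_graph S' i j -> ci_graph Sstar i j.
  move=> i j e'ij; apply/negPn/negP => neij.
  have nij : i != j by case/andP: e'ij.
  have [k [eik ki kj ckj]] := tree_mid acy (con i j) nij neij.
  have ik : i != k by rewrite eq_sym.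
  have sepA := cut_sep acy eik ik.
  have fA := @factor _ _ Sstar i k Spd eik sepA j ckj.
  have sepB := cut_sep acy' e'ij nij.
  have nzB := @edge_nz _ _ S' i j Sp e'ij sepB.
  have Bk := dg k.
  have Dk := Dlt k.
  have D'k := D'nn k.
  rewrite (offd _ _ nij) (offd _ _ ik) (offd _ _ kj) in fA.
  case/orP: (cut_part e'ij nij (con' i k)) => [ck|ck].
  - have e'ji : ci_graph S' j i by rewrite esym'.
    have ji : j != i by rewrite eq_sym.
    have sepB' := cut_sep acy' e'ji ji.
    have ck' : connect (cut (ci_graph S') j i) i k.
      by rewrite (eq_connect (@cutC _ _ j i)).
    have fB := @factor _ _ S' j i Sp e'ji sepB' k ck'.
    rewrite (@symE _ _ S' j k S's) (@symE _ _ S' j i S's) in fB.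
    have RP := @rpair _ _ S' lamstar i k S's Seig (ltW lam0) ik (@posdef_diag _ _ S' i Sp).
    have hq : Sstar k k * S' i i = S' i k ^+ 2.
      apply: (mulIf nzB); rewrite expr2.
      by rewrite mulrAC (mulrC _ (S' i j)) fA -mulrA fB; ring.
    have Bii := @posdef_diag _ _ S' i Sp.
    rewrite -hq Bk in RP; exact: (@arith R _ _ _ _ _ RP Bii Dk D'k).
  - have fB := @factor _ _ S' i j Sp e'ij sepB k ck.
    have jk : j != k by rewrite eq_sym.
    have RP := @rpair _ _ S' lamstar j k S's Seig (ltW lam0) jk (@posdef_diag _ _ S' j Sp).
    have hq : Sstar k k * S' j j = S' j k ^+ 2.
      apply: (mulIf nzB); rewrite expr2.
      rewrite mulrAC (mulrC _ (S' i j)) fA mulrAC fB (@symE _ _ S' k j S's); ring.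
    have Bjj := @posdef_diag _ _ S' j Sp.
    rewrite -hq Bk in RP; exact: (@arith R _ _ _ _ _ RP Bjj Dk D'k).
have step2 := tree_sub acy con' step1 (@ci_sym _ _ _ Spd).
move=> x y; apply/idP/idP; first exact: step1.
move=> exy; apply: step2 => //; by case/andP: exy.
Qed.
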